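(* For $n=0,1,2,\ldots$ let $R_n=\sum_{k=0}^n\binom{n}{k}\binom{n+k}{k}\frac{1}{2k-1}$. The sequence $\{\sqrt[n]{R_n}\}_{n=5}^\infty$ is strictly log-concave; equivalently, the sequence $\left\{\frac{\sqrt[n+1]{R_{n+1}}}{\sqrt[n]{R_n}}\right\}_{n=5}^\infty$ is strictly decreasing.
   Context: A sequence $\{z_n\}$ of positive numbers is strictly log-concave if $z_{n-1}z_{n+1}<z_n^2$ for all indices $n$ for which $z_{n-1},z_n,z_{n+1}$ belong to the sequence. *)

(* Defs.v *)
From Stdlib Require Import Reals.
Open Scope R_scope.

Definition Rseq (n : nat) : R :=
  sum_f_R0 (fun k => C n k * C (n + k) k / (2 * INR k - 1)) n.

(* z_n = R_n^{1/n}, the positive n-th root (meaningful for R_n > 0, n >= 1). *)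
Definition zseq (n : nat) : R := Rpower (Rseq n) (/ INR n).

(* Main.v *)
Require Import Defs.
From Stdlib Require Import Reals Lra Lia Psatz Factorial.
Open Scope R_scope.

Ltac nz := first [assumption | apply Rgt_not_eq; lra | apply Rlt_not_eq; lra].

Definition tau (m k : nat) : R :=
  if (k <=? m)%nat then
    INR (fact (m+k)) / (INR (fact k) * INR (fact k) * INR (fact (m-k))) / (2*INR k - 1)
  else 0.

Lemma two_k_m1_neq (k : nat) : 2 * INR k - 1 <> 0.
Proof.
  destruct k as [|k].
  - simpl. lra.
  - rewrite S_INR. pose proof (pos_INR k). lra.
Qed.

Lemma Rseq_tau (n : nat) : Rseq n = sum_f_R0 (tau n) n.
Proof.
  unfold Rseq. apply sum_eq. intros k Hk.
  unfold tau. replace (k <=? n)%nat with true by (symmetry; apply Nat.leb_le; lia).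
  unfold C. replace (n + k - k)%nat with n by lia.
  pose proof (INR_fact_neq_0 n). pose proof (INR_fact_neq_0 k).
  pose proof (INR_fact_neq_0 (n-k)). pose proof (INR_fact_neq_0 (n+k)).
  pose proof (two_k_m1_neq k).
  field. repeat split; auto.
Qed.

Lemma tau_shift_m (m k : nat) :
  tau m k * (INR m + 1 + INR k) = tau (m+1) k * (INR m + 1 - INR k).
Proof.
  unfold tau.
  destruct (Nat.leb_spec k m) as [H|H].
  - replace (k <=? m+1)%nat with true by (symmetry; apply Nat.leb_le; lia).
    replace (m + 1 + k)%nat with (S (m+k)) by lia.
    replace (m + 1 - k)%nat with (S (m-k)) by lia.
    rewrite !fact_simpl, !mult_INR, !S_INR, plus_INR, minus_INR by lia.
    pose proof (INR_fact_neq_0 k).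
    pose proof (INR_fact_neq_0 (m-k)). pose proof (INR_fact_neq_0 (m+k)).
    pose proof (two_k_m1_neq k). pose proof (pos_INR m). pose proof (pos_INR k).
    assert (INR m - INR k + 1 <> 0) by (apply le_INR in H; lra).
    field. repeat split; nz.
  - destruct (Nat.leb_spec k (m+1)) as [H2|H2].
    + assert (k = m+1)%nat by lia. subst. rewrite plus_INR. simpl. lra.
    + lra.
Qed.

Lemma tau_shift_k (m k : nat) :
  tau m (k+1) * ((INR k + 1) * (INR k + 1)) * (2 * INR k + 1) =
  tau m k * (INR m + INR k + 1) * (INR m - INR k) * (2 * INR k - 1).
Proof.
  unfold tau.
  destruct (Nat.leb_spec (k+1) m) as [H|H].
  - replace (k <=? m)%nat with true by (symmetry; apply Nat.leb_le; lia).
    replace (m + (k+1))%nat with (S (m+k)) by lia.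
    replace (k+1)%nat with (S k) by lia.
    replace (m - k)%nat with (S (m - S k)) by lia.
    rewrite !fact_simpl, !mult_INR, !S_INR, plus_INR.
    replace (INR (m - S k)) with (INR m - INR k - 1)
      by (rewrite minus_INR by (lia); rewrite S_INR; lra).
    pose proof (INR_fact_neq_0 k).
    pose proof (INR_fact_neq_0 (m - S k)). pose proof (INR_fact_neq_0 (m+k)).
    pose proof (two_k_m1_neq k). pose proof (pos_INR m). pose proof (pos_INR k).
    replace (2 * (INR k + 1) - 1) with (2 * INR k + 1) by ring.
    assert (INR k + 1 <= INR m) by (apply le_INR in H; rewrite plus_INR in H; exact H).
    field. repeat split; nz.
  - destruct (Nat.leb_spec k m) as [H2|H2].
    + assert (k = m) by lia. subst. lra.
    + lra.
Qed.
Definition Npoly (n k : R) : R :=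
  96 - 88*k + 16*k^2 + 72*n - 60*n*k + 8*n*k^2 + 12*n^2 - 8*n^2*k.
Definition Dpoly (n k : R) : R := (n+k+1)*(n+k+2).
Definition Gc (n k : nat) : R :=
  match k with
  | O => 0
  | S j => tau (n+3) j * Npoly (INR n) (INR k) / Dpoly (INR n) (INR k)
  end.

Lemma INR_plus_c (n c : nat) : INR (n + c) = INR n + INR c.
Proof. apply plus_INR. Qed.

Lemma tau_down (m k : nat) :
  tau m k = tau (m+1) k * (INR m + 1 - INR k) / (INR m + 1 + INR k).
Proof.
  pose proof (tau_shift_m m k). pose proof (pos_INR m). pose proof (pos_INR k).
  field_simplify_eq; [|nz]. lra.
Qed.

Lemma per_k (n k : nat) : (k <= n + 3)%nat ->
  (INR n + 3) * tau (n+3) k - (7 * INR n + 13) * tau (n+2) k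
  + (7 * INR n + 15) * tau (n+1) k - (INR n + 1) * tau n k
  = Gc n (S k) - Gc n k.
Proof.
  intros Hk.
  pose proof (pos_INR n) as Hn. pose proof (pos_INR k) as Hk0.
  assert (h2 : tau (n+2) k = tau (n+3) k * (INR n + 3 - INR k) / (INR n + 3 + INR k)).
  { rewrite tau_down. replace (n+2+1)%nat with (n+3)%nat by lia.
    rewrite plus_INR. simpl (INR 2). f_equal; f_equal; ring. }
  assert (h1 : tau (n+1) k = tau (n+2) k * (INR n + 2 - INR k) / (INR n + 2 + INR k)).
  { rewrite tau_down. replace (n+1+1)%nat with (n+2)%nat by lia.
    rewrite plus_INR. simpl (INR 1). f_equal; f_equal; ring. }
  assert (h0 : tau n k = tau (n+1) k * (INR n + 1 - INR k) / (INR n + 1 + INR k)).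
  { rewrite tau_down. reflexivity. }
  rewrite h0, h1, h2.
  destruct k as [|j].
  - unfold Gc. rewrite S_INR. simpl (INR 0). unfold Npoly, Dpoly.
    clear h0 h1 h2. field. repeat split; nz.
  - assert (hk : tau (n+3) j = tau (n+3) (S j) * ((INR j + 1) * (INR j + 1)) * (2 * INR j + 1)
        / ((INR n + 3 + INR j + 1) * (INR n + 3 - INR j) * (2 * INR j - 1))).
    { pose proof (tau_shift_k (n+3) j) as E. replace (j+1)%nat with (S j) in E by lia.
      rewrite plus_INR in E. simpl (INR 3) in E.
      assert (INR j + 1 <= INR n + 3).
      { rewrite <- S_INR. replace (INR n + 3) with (INR (n+3)) by (rewrite plus_INR; simpl; ring).
        apply le_INR. lia. }
      pose proof (two_k_m1_neq j).
      rewrite E. clear E h0 h1 h2. pose proof (pos_INR j). field. repeat split; nz. }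
    unfold Gc. rewrite hk. rewrite !S_INR in *.
    pose proof (pos_INR j).
    assert (INR j + 1 <= INR n + 3).
    { rewrite <- S_INR. replace (INR n + 3) with (INR (n+3)) by (rewrite plus_INR; simpl; ring).
      apply le_INR. lia. }
    pose proof (two_k_m1_neq j).
    clear hk h0 h1 h2. unfold Npoly, Dpoly. field. repeat split; nz.
Qed.

Lemma tau_zero (m k : nat) : (m < k)%nat -> tau m k = 0.
Proof. intros H. unfold tau. replace (k <=? m)%nat with false; [reflexivity|].
  symmetry. apply Nat.leb_gt. exact H. Qed.

Lemma sum_ext_zero (f : nat -> R) (m j : nat) :
  (forall k, (m < k)%nat -> f k = 0) -> sum_f_R0 f (m + j) = sum_f_R0 f m.
Proof.
  intros H. induction j as [|j IH].
  - now rewrite Nat.add_0_r.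
  - replace (m + S j)%nat with (S (m + j)) by lia. simpl. rewrite IH, H by lia. ring.
Qed.

Lemma Rseq_ext (m j : nat) : Rseq m = sum_f_R0 (tau m) (m + j).
Proof. rewrite sum_ext_zero. apply Rseq_tau. intros; apply tau_zero; auto. Qed.

Lemma telescope (g : nat -> R) (M : nat) :
  sum_f_R0 (fun k => g (S k) - g k) M = g (S M) - g O.
Proof. induction M as [|M IH]; simpl; [ring|]. rewrite IH. simpl. ring. Qed.

Lemma sum_lin4 (f3 f2 f1 f0 : nat -> R) (a b c d : R) (M : nat) :
  sum_f_R0 (fun k => a * f3 k - b * f2 k + c * f1 k - d * f0 k) M =
  a * sum_f_R0 f3 M - b * sum_f_R0 f2 M + c * sum_f_R0 f1 M - d * sum_f_R0 f0 M.
Proof. induction M as [|M IH]; simpl; [ring|]. rewrite IH. ring. Qed.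

Lemma Rseq_rec (n : nat) :
  (INR n + 3) * Rseq (n+3) =
  (7 * INR n + 13) * Rseq (n+2) - (7 * INR n + 15) * Rseq (n+1) + (INR n + 1) * Rseq n.
Proof.
  assert (E : sum_f_R0 (fun k => (INR n + 3) * tau (n+3) k - (7 * INR n + 13) * tau (n+2) k
     + (7 * INR n + 15) * tau (n+1) k - (INR n + 1) * tau n k) (n+3) = 0).
  { rewrite (sum_eq _ (fun k => Gc n (S k) - Gc n k)).
    - rewrite telescope.
      change (Gc n 0) with 0.
      change (Gc n (S (n+3))) with (tau (n+3) (n+3) * Npoly (INR n) (INR (S (n+3))) / Dpoly (INR n) (INR (S (n+3)))).
      replace (INR (S (n+3))) with (INR n + 4)
        by (rewrite S_INR, plus_INR; replace (INR 3) with 3 by (simpl; lra); ring).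
      replace (Npoly (INR n) (INR n + 4)) with 0 by (unfold Npoly; ring).
      unfold Rdiv. rewrite Rmult_0_r, Rmult_0_l. apply Rminus_diag_eq. reflexivity.
    - intros k Hk. apply per_k. exact Hk. }
  rewrite sum_lin4 in E.
  rewrite (Rseq_ext (n+3) 0), (Rseq_ext (n+2) 1), (Rseq_ext (n+1) 2), (Rseq_ext n 3).
  replace (n+3+0)%nat with (n+3)%nat by lia.
  replace (n+2+1)%nat with (n+3)%nat by lia.
  replace (n+1+2)%nat with (n+3)%nat by lia.
  lra.
Qed.

Lemma R0v : Rseq 0 = -1.
Proof. rewrite Rseq_tau. unfold tau. simpl. field. Qed.
Lemma R1v : Rseq 1 = 1.
Proof. rewrite Rseq_tau. unfold tau. simpl. field. Qed.
Lemma R2v : Rseq 2 = 7.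
Proof. rewrite Rseq_tau. unfold tau. simpl. field. Qed.

Lemma rec_at (n : nat) (a b c : R) (m : nat) :
  m = (n+3)%nat -> Rseq n = a -> Rseq (n+1) = b -> Rseq (n+2) = c ->
  Rseq m = ((7 * INR n + 13) * c - (7 * INR n + 15) * b + (INR n + 1) * a) / (INR n + 3).
Proof.
  intros -> Ha Hb Hc. pose proof (Rseq_rec n) as E. pose proof (pos_INR n).
  rewrite Ha, Hb, Hc in E. field_simplify_eq; [|nz]. lra.
Qed.

Lemma R3v : Rseq 3 = 25.
Proof. rewrite (rec_at 0 (-1) 1 7); [simpl; field|reflexivity|exact R0v|exact R1v|exact R2v]. Qed.
Lemma R4v : Rseq 4 = 87.
Proof. rewrite (rec_at 1 1 7 25); [simpl; field|reflexivity|exact R1v|exact R2v|exact R3v]. Qed.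
Lemma R5v : Rseq 5 = 329.
Proof. rewrite (rec_at 2 7 25 87); [simpl; field|reflexivity|exact R2v|exact R3v|exact R4v]. Qed.
Lemma R6v : Rseq 6 = 1359.
Proof. rewrite (rec_at 3 25 87 329); [simpl; field|reflexivity|exact R3v|exact R4v|exact R5v]. Qed.
Lemma R7v : Rseq 7 = 6001.
Proof. rewrite (rec_at 4 87 329 1359); [simpl; field|reflexivity|exact R4v|exact R5v|exact R6v]. Qed.
Lemma R8v : Rseq 8 = 27759.
Proof. rewrite (rec_at 5 329 1359 6001); [simpl; field|reflexivity|exact R5v|exact R6v|exact R7v]. Qed.
Lemma R9v : Rseq 9 = 132689.
Proof. rewrite (rec_at 6 1359 6001 27759); [simpl; field|reflexivity|exact R6v|exact R7v|exact R8v]. Qed.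

Lemma tau_nonneg (m k : nat) : (1 <= k)%nat -> 0 <= tau m k.
Proof.
  intros Hk. unfold tau. destruct (k <=? m)%nat; [|lra].
  assert (1 <= INR k) by (apply (le_INR 1); exact Hk).
  pose proof (INR_fact_lt_0 (m+k)). pose proof (INR_fact_lt_0 k). pose proof (INR_fact_lt_0 (m-k)).
  unfold Rdiv. apply Rmult_le_pos; [apply Rmult_le_pos|].
  - lra.
  - left. apply Rinv_0_lt_compat. apply Rmult_lt_0_compat; [apply Rmult_lt_0_compat|]; lra.
  - left. apply Rinv_0_lt_compat. lra.
Qed.

Lemma sum_nonneg_shift (f : nat -> R) (M : nat) :
  (forall k, 0 <= f k) -> 0 <= sum_f_R0 f M.
Proof. intros H. induction M; simpl; [apply H|]. pose proof (H (S M)). lra. Qed.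

Lemma Rseq_pos (n : nat) : (1 <= n)%nat -> 0 < Rseq n.
Proof.
  intros Hn. rewrite Rseq_tau.
  destruct n as [|m]; [lia|].
  rewrite decomp_sum by lia. simpl pred.
  destruct m as [|p].
  - simpl. unfold tau. simpl. lra.
  - rewrite decomp_sum by lia. simpl pred.
    assert (0 <= sum_f_R0 (fun i => tau (S (S p)) (S (S i))) p)
      by (apply sum_nonneg_shift; intros; apply tau_nonneg; lia).
    assert (E0 : tau (S (S p)) 0 = -1).
    { unfold tau. simpl (0 <=? S (S p))%nat. cbv iota. rewrite Nat.add_0_r, Nat.sub_0_r.
      pose proof (INR_fact_neq_0 (S (S p))). simpl (INR (fact 0)). change (INR 0) with 0. field; repeat split; nz. }
    assert (E1 : tau (S (S p)) 1 = (INR p + 3) * (INR p + 2)).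
    { unfold tau. simpl (1 <=? S (S p))%nat. cbv iota.
      replace (S (S p) + 1)%nat with (S (S (S p))) by lia.
      replace (S (S p) - 1)%nat with (S p) by lia.
      rewrite (fact_simpl (S (S p))), (fact_simpl (S p)), !mult_INR, !S_INR.
      pose proof (INR_fact_neq_0 (S p)). simpl (INR (fact 1)). simpl (INR 1). change (INR 0) with 0. field; repeat split; nz. }
    rewrite E0, E1. pose proof (pos_INR p). nra.
Qed.

Definition Un (s x : R) : R :=
  (192+128*s)*x^3 + (-288-192*s)*x^2 + (192+102*s)*x + (-519-255*s).
Definition Ln (s x : R) : R := Un s x * x - 576*(3+2*s).

Lemma I1_pos (m s : R) : s * s = 2 -> (35355339/25000000) <= s <= (141421357/100000000) -> 0 <= m ->
  0 <= ((m + 6)+3)*Un s ((m + 6)+1)*Ln s (m + 6)*Un s ((m + 6)+2) - (7*(m + 6)+13)*Un s ((m + 6)+1)*Ln s (m + 6)*64*((m + 6)+2)^3 + (7*(m + 6)+15)*Ln s (m + 6)*4096*((m + 6)+1)^3*((m + 6)+2)^3 - ((m + 6)+1)*262144*(m + 6)^4*((m + 6)+1)^3*((m + 6)+2)^3.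
Proof.
  intros Hs Hsb Hm.
  assert (Hid : ((m + 6)+3)*Un s ((m + 6)+1)*Ln s (m + 6)*Un s ((m + 6)+2) - (7*(m + 6)+13)*Un s ((m + 6)+1)*Ln s (m + 6)*64*((m + 6)+2)^3 + (7*(m + 6)+15)*Ln s (m + 6)*4096*((m + 6)+1)^3*((m + 6)+2)^3 - ((m + 6)+1)*262144*(m + 6)^4*((m + 6)+1)^3*((m + 6)+2)^3 =
    (18869017269114 + 24033089025162*s)*m^0 + (21832206576729 + 25744010885781*s)*m^1 + (10493829762975 + 11677678736457*s)*m^2 + (2740310897760 + 2914365891966*s)*m^3 + (421628839992 + 432491162904*s)*m^4 + (38284596864 + 38152337712*s)*m^5 + (1899349248 + 1850317824*s)*m^6 + (39650304 + 37979136*s)*m^7 + (s*s-2)*(1677828685953834 + 2122878079571130*s^1 + 2931965185671561*m^1 + 3611443064268645*m^1*s^1 + 2314130702612811*m^2 + 2778525165052821*m^2*s^1 + 1089750987831936*m^3 + 1277047250454966*m^3*s^1 + 340406029590892*m^4 + 389807056557324*m^4*s^1 + 74097063371008*m^5 + 83005790269144*m^5*s^1 + 11473213533312*m^6 + 12586058464512*m^6*s^1 + 1264120435200*m^7 + 1359230572032*m^7*s^1 + 97151483904*m^8 + 102475186176*m^8*s^1 + 4961009664*m^9 + 5137268736*m^9*s^1 + 151519232*m^10 + 154140672*m^10*s^1 + 2097152*m^11 + 2097152*m^11*s^1)) by (unfold Ln, Un; ring).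
  rewrite Hid. replace (s*s-2) with 0 by lra.
  assert (0 <= (18869017269114 + 24033089025162*s)*m^0) by (simpl; lra).
  assert (0 <= (21832206576729 + 25744010885781*s)*m^1) by (apply Rmult_le_pos; [lra | apply pow_le; lra]).
  assert (0 <= (10493829762975 + 11677678736457*s)*m^2) by (apply Rmult_le_pos; [lra | apply pow_le; lra]).
  assert (0 <= (2740310897760 + 2914365891966*s)*m^3) by (apply Rmult_le_pos; [lra | apply pow_le; lra]).
  assert (0 <= (421628839992 + 432491162904*s)*m^4) by (apply Rmult_le_pos; [lra | apply pow_le; lra]).
  assert (0 <= (38284596864 + 38152337712*s)*m^5) by (apply Rmult_le_pos; [lra | apply pow_le; lra]).
  assert (0 <= (1899349248 + 1850317824*s)*m^6) by (apply Rmult_le_pos; [lra | apply pow_le; lra]).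
  assert (0 <= (39650304 + 37979136*s)*m^7) by (apply Rmult_le_pos; [lra | apply pow_le; lra]).
  lra.
Qed.

Lemma I2_pos (m s : R) : s * s = 2 -> (35355339/25000000) <= s <= (141421357/100000000) -> 0 <= m ->
  0 <= (7*(m + 6)+13)*Ln s ((m + 6)+1)*Un s (m + 6)*64*((m + 6)+2)^4 - (7*(m + 6)+15)*Un s (m + 6)*4096*((m + 6)+1)^4*((m + 6)+2)^4 + ((m + 6)+1)*262144*((m + 6)+1)^4*(m + 6)^3*((m + 6)+2)^4 - ((m + 6)+3)*Ln s ((m + 6)+1)*Un s (m + 6)*Ln s ((m + 6)+2).
Proof.
  intros Hs Hsb Hm.
  assert (Hid : (7*(m + 6)+13)*Ln s ((m + 6)+1)*Un s (m + 6)*64*((m + 6)+2)^4 - (7*(m + 6)+15)*Un s (m + 6)*4096*((m + 6)+1)^4*((m + 6)+2)^4 + ((m + 6)+1)*262144*((m + 6)+1)^4*(m + 6)^3*((m + 6)+2)^4 - ((m + 6)+3)*Ln s ((m + 6)+1)*Un s (m + 6)*Ln s ((m + 6)+2) =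
    (125161834648056 + 13717100829048*s)*m^0 + (214582061673639 + 71272141262031*s)*m^1 + (147729895817520 + 66584349709182*s)*m^2 + (55007288442513 + 28708422827865*s)*m^3 + (12320203593384 + 6999601440330*s)*m^4 + (1716800975688 + 1029895800888*s)*m^5 + (146291848320 + 91083031248*s)*m^6 + (6999316224 + 4475240448*s)*m^7 + (144374784 + 94141440*s)*m^8 + (s*s-2)*((-15488585450270664) + (-19848139401627720)*s^1 + (-28713692629457841)*m^1 + (-35728324317642057)*m^1*s^1 + (-24244020266404956)*m^2 + (-29360473199271102)*m^2*s^1 + (-12335083664390819)*m^3 + (-14569509990108915)*m^3*s^1 + (-4214281628643404)*m^4 + (-4863764250744530)*m^4*s^1 + (-1019059718441836)*m^5 + (-1151046366112932)*m^5*s^1 + (-178919308776832)*m^6 + (-198059481694168)*m^6*s^1 + (-22990730612352)*m^7 + (-24971722949376)*m^7*s^1 + (-2146653639168)*m^8 + (-2290064217600)*m^8*s^1 + (-142078443520)*m^9 + (-148993720320)*m^9*s^1 + (-6328877056)*m^10 + (-6528729088)*m^10*s^1 + (-170393600)*m^11 + (-173015040)*m^11*s^1 + (-2097152)*m^12 + (-2097152)*m^12*s^1)) by (unfold Ln, Un; ring).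
  rewrite Hid. replace (s*s-2) with 0 by lra.
  assert (0 <= (125161834648056 + 13717100829048*s)*m^0) by (simpl; lra).
  assert (0 <= (214582061673639 + 71272141262031*s)*m^1) by (apply Rmult_le_pos; [lra | apply pow_le; lra]).
  assert (0 <= (147729895817520 + 66584349709182*s)*m^2) by (apply Rmult_le_pos; [lra | apply pow_le; lra]).
  assert (0 <= (55007288442513 + 28708422827865*s)*m^3) by (apply Rmult_le_pos; [lra | apply pow_le; lra]).
  assert (0 <= (12320203593384 + 6999601440330*s)*m^4) by (apply Rmult_le_pos; [lra | apply pow_le; lra]).
  assert (0 <= (1716800975688 + 1029895800888*s)*m^5) by (apply Rmult_le_pos; [lra | apply pow_le; lra]).
  assert (0 <= (146291848320 + 91083031248*s)*m^6) by (apply Rmult_le_pos; [lra | apply pow_le; lra]).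
  assert (0 <= (6999316224 + 4475240448*s)*m^7) by (apply Rmult_le_pos; [lra | apply pow_le; lra]).
  assert (0 <= (144374784 + 94141440*s)*m^8) by (apply Rmult_le_pos; [lra | apply pow_le; lra]).
  lra.
Qed.

Lemma I3_pos (m s : R) : s * s = 2 -> (35355339/25000000) <= s <= (141421357/100000000) -> 0 <= m ->
  0 < ((m + 7)+2)*Ln s (m + 7)^3*((m + 7)-1)^3 - ((7*(m + 7)+6)*Ln s (m + 7) - (7*(m + 7)+8)*64*(m + 7)^4)*Un s ((m + 7)-1)*64*(m + 7)^8 - (m + 7)*262144*(m + 7)^12*((m + 7)-1)^3.
Proof.
  intros Hs Hsb Hm.
  assert (Hid : ((m + 7)+2)*Ln s (m + 7)^3*((m + 7)-1)^3 - ((7*(m + 7)+6)*Ln s (m + 7) - (7*(m + 7)+8)*64*(m + 7)^4)*Un s ((m + 7)-1)*64*(m + 7)^8 - (m + 7)*262144*(m + 7)^12*((m + 7)-1)^3 =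
    (1601660225138456856 + 1237733014110263832*s)*m^0 + (3314323330321107324 + 2524370543833566540*s)*m^1 + (3183717676909644570 + 2393685621703717890*s)*m^2 + (1877003521000169853 + 1395289395103754889*s)*m^3 + (756740194418101014 + 557040482903944128*s)*m^4 + (220055077799805888 + 160635430820409804*s)*m^5 + (47438009812006272 + 34385485252642560*s)*m^6 + (7669825375485807 + 5526810960803127*s)*m^7 + (929486618839512 + 666510789292758*s)*m^8 + (83349674137272 + 59527000252488*s)*m^9 + (5373856707456 + 3825216988464*s)*m^10 + (235840735488 + 167421861888*s)*m^11 + (6313608192 + 4472128512*s)*m^12 + (77856768 + 55050240*s)*m^13 + (s*s-2)*(22445225826492498360 + 28078229324816049528*s^1 + 55784112287573307564*m^1 + 68545491481281045276*m^1*s^1 + 64824548754141325602*m^2 + 78307607126954332026*m^2*s^1 + 46762642173787880657*m^3 + 55578092560411147317*m^3*s^1 + 23442700343606351378*m^4 + 27432211702297599332*m^4*s^1 + 8661714395681760612*m^5 + 9985632359774542152*m^5*s^1 + 2440474134730287752*m^6 + 2773292081426979216*m^6*s^1 + 534968018275368083*m^7 + 599505407800611107*m^7*s^1 + 92220266312092332*m^8 + 101952094214629026*m^8*s^1 + 12545194142850156*m^9 + 13686212658956004*m^9*s^1 + 1342425072611712*m^10 + 1445573618630616*m^10*s^1 + 111819517623936*m^11 + 118878379119360*m^11*s^1 + 7108240871936*m^12 + 7462128047616*m^12*s^1 + 333382221824*m^13 + 345648644096*m^13*s^1 + 10879696896*m^14 + 11142463488*m^14*s^1 + 220725248*m^15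 + 223346688*m^15*s^1 + 2097152*m^16 + 2097152*m^16*s^1)) by (unfold Ln, Un; ring).
  rewrite Hid. replace (s*s-2) with 0 by lra.
  assert (0 < (1601660225138456856 + 1237733014110263832*s)*m^0) by (simpl; lra).
  assert (0 <= (3314323330321107324 + 2524370543833566540*s)*m^1) by (apply Rmult_le_pos; [lra | apply pow_le; lra]).
  assert (0 <= (3183717676909644570 + 2393685621703717890*s)*m^2) by (apply Rmult_le_pos; [lra | apply pow_le; lra]).
  assert (0 <= (1877003521000169853 + 1395289395103754889*s)*m^3) by (apply Rmult_le_pos; [lra | apply pow_le; lra]).
  assert (0 <= (756740194418101014 + 557040482903944128*s)*m^4) by (apply Rmult_le_pos; [lra | apply pow_le; lra]).
  assert (0 <= (220055077799805888 + 160635430820409804*s)*m^5) by (apply Rmult_le_pos; [lra | apply pow_le; lra]).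
  assert (0 <= (47438009812006272 + 34385485252642560*s)*m^6) by (apply Rmult_le_pos; [lra | apply pow_le; lra]).
  assert (0 <= (7669825375485807 + 5526810960803127*s)*m^7) by (apply Rmult_le_pos; [lra | apply pow_le; lra]).
  assert (0 <= (929486618839512 + 666510789292758*s)*m^8) by (apply Rmult_le_pos; [lra | apply pow_le; lra]).
  assert (0 <= (83349674137272 + 59527000252488*s)*m^9) by (apply Rmult_le_pos; [lra | apply pow_le; lra]).
  assert (0 <= (5373856707456 + 3825216988464*s)*m^10) by (apply Rmult_le_pos; [lra | apply pow_le; lra]).
  assert (0 <= (235840735488 + 167421861888*s)*m^11) by (apply Rmult_le_pos; [lra | apply pow_le; lra]).
  assert (0 <= (6313608192 + 4472128512*s)*m^12) by (apply Rmult_le_pos; [lra | apply pow_le; lra]).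
  assert (0 <= (77856768 + 55050240*s)*m^13) by (apply Rmult_le_pos; [lra | apply pow_le; lra]).
  lra.
Qed.

Lemma L4_pos (m s : R) : s * s = 2 -> (35355339/25000000) <= s <= (141421357/100000000) -> 0 <= m ->
  0 <= Ln s (m + 6) - 256*(m + 6)^4.
Proof.
  intros Hs Hsb Hm.
  assert (Hid : Ln s (m + 6) - 256*(m + 6)^4 =
    ((-143082) + 125406*s)*m^0 + ((-84615) + 90825*s)*m^1 + ((-18816) + 24294*s)*m^2 + ((-1824) + 2880*s)*m^3 + ((-64) + 128*s)*m^4 + (s*s-2)*(0)) by (unfold Ln, Un; ring).
  rewrite Hid. replace (s*s-2) with 0 by lra.
  assert (0 <= ((-143082) + 125406*s)*m^0) by (simpl; lra).
  assert (0 <= ((-84615) + 90825*s)*m^1) by (apply Rmult_le_pos; [lra | apply pow_le; lra]).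
  assert (0 <= ((-18816) + 24294*s)*m^2) by (apply Rmult_le_pos; [lra | apply pow_le; lra]).
  assert (0 <= ((-1824) + 2880*s)*m^3) by (apply Rmult_le_pos; [lra | apply pow_le; lra]).
  assert (0 <= ((-64) + 128*s)*m^4) by (apply Rmult_le_pos; [lra | apply pow_le; lra]).
  lra.
Qed.

Lemma U6_pos (m s : R) : s * s = 2 -> (35355339/25000000) <= s <= (141421357/100000000) -> 0 <= m ->
  0 <= 384*(m + 1)^3 - Un s (m + 1).
Proof.
  intros Hs Hsb Hm.
  assert (Hid : 384*(m + 1)^3 - Un s (m + 1) =
    (807 + 217*s)*m^0 + (960 + (-102)*s)*m^1 + (864 + (-192)*s)*m^2 + (192 + (-128)*s)*m^3 + (s*s-2)*(0)) by (unfold Ln, Un; ring).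
  rewrite Hid. replace (s*s-2) with 0 by lra.
  assert (0 <= (807 + 217*s)*m^0) by (simpl; lra).
  assert (0 <= (960 + (-102)*s)*m^1) by (apply Rmult_le_pos; [lra | apply pow_le; lra]).
  assert (0 <= (864 + (-192)*s)*m^2) by (apply Rmult_le_pos; [lra | apply pow_le; lra]).
  assert (0 <= (192 + (-128)*s)*m^3) by (apply Rmult_le_pos; [lra | apply pow_le; lra]).
  lra.
Qed.

Definition s2 : R := sqrt 2.
Lemma s2_sq : s2 * s2 = 2.
Proof. unfold s2. apply sqrt_sqrt. lra. Qed.
Lemma s2_nonneg : 0 <= s2.
Proof. unfold s2. apply sqrt_pos. Qed.
Lemma s2_bounds : (35355339/25000000) <= s2 <= (141421357/100000000).
Proof. pose proof s2_sq. pose proof s2_nonneg. split; nra. Qed.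

Definition Ub (x : R) : R := Un s2 x / (64 * x^3).
Definition Lb (x : R) : R := Ln s2 x / (64 * x^4).

Lemma I1_gen (x : R) : 6 <= x ->
  0 <= (x+3)*Ub (x+1)*Lb x*Ub (x+2) - (7*x+13)*Ub (x+1)*Lb x + (7*x+15)*Lb x - (x+1).
Proof.
  intros Hx. pose proof (I1_pos (x-6) s2 s2_sq s2_bounds) as H.
  replace (x - 6 + 6) with x in H by ring.
  assert (Hid : (x+3)*Ub (x+1)*Lb x*Ub (x+2) - (7*x+13)*Ub (x+1)*Lb x + (7*x+15)*Lb x - (x+1) =
    ((x+3)*Un s2 (x+1)*Ln s2 x*Un s2 (x+2) - (7*x+13)*Un s2 (x+1)*Ln s2 x*64*(x+2)^3 + (7*x+15)*Ln s2 x*4096*(x+1)^3*(x+2)^3 - (x+1)*262144*x^4*(x+1)^3*(x+2)^3)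
    / (262144 * (x+1)^3 * x^4 * (x+2)^3)).
  { unfold Ub, Lb. field. repeat split; try nz; apply pow_nonzero; nz. }
  rewrite Hid. apply Rmult_le_pos; [apply H; lra|].
  left. apply Rinv_0_lt_compat. repeat apply Rmult_lt_0_compat; try lra; apply pow_lt; lra.
Qed.

Lemma I2_gen (x : R) : 6 <= x ->
  0 <= (7*x+13)*Lb (x+1)*Ub x - (7*x+15)*Ub x + (x+1) - (x+3)*Lb (x+1)*Ub x*Lb (x+2).
Proof.
  intros Hx. pose proof (I2_pos (x-6) s2 s2_sq s2_bounds) as H.
  replace (x - 6 + 6) with x in H by ring.
  assert (Hid : (7*x+13)*Lb (x+1)*Ub x - (7*x+15)*Ub x + (x+1) - (x+3)*Lb (x+1)*Ub x*Lb (x+2) =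
    ((7*x+13)*Ln s2 (x+1)*Un s2 x*64*(x+2)^4 - (7*x+15)*Un s2 x*4096*(x+1)^4*(x+2)^4 + (x+1)*262144*(x+1)^4*x^3*(x+2)^4 - (x+3)*Ln s2 (x+1)*Un s2 x*Ln s2 (x+2))
    / (262144 * x^3 * (x+1)^4 * (x+2)^4)).
  { unfold Ub, Lb. field. repeat split; try nz; apply pow_nonzero; nz. }
  rewrite Hid. apply Rmult_le_pos; [apply H; lra|].
  left. apply Rinv_0_lt_compat. repeat apply Rmult_lt_0_compat; try lra; apply pow_lt; lra.
Qed.

Lemma I3_gen (x : R) : 7 <= x ->
  0 < (x+2)*Lb x^3 - ((7*x+6)*Lb x - (7*x+8))*Ub (x-1) - x.
Proof.
  intros Hx. pose proof (I3_pos (x-7) s2 s2_sq s2_bounds) as H.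
  replace (x - 7 + 7) with x in H by ring.
  assert (Hid : (x+2)*Lb x^3 - ((7*x+6)*Lb x - (7*x+8))*Ub (x-1) - x =
    ((x+2)*Ln s2 x^3*(x-1)^3 - ((7*x+6)*Ln s2 x - (7*x+8)*64*x^4)*Un s2 (x-1)*64*x^8 - x*262144*x^12*(x-1)^3)
    / (262144 * x^12 * (x-1)^3)).
  { unfold Ub, Lb. field. repeat split; try nz; apply pow_nonzero; nz. }
  rewrite Hid. apply Rdiv_lt_0_compat; [apply H; lra|].
  repeat apply Rmult_lt_0_compat; try lra; apply pow_lt; lra.
Qed.

Lemma L4_gen (x : R) : 6 <= x -> 4 <= Lb x.
Proof.
  intros Hx. pose proof (L4_pos (x-6) s2 s2_sq s2_bounds) as H.
  replace (x - 6 + 6) with x in H by ring.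
  unfold Lb. assert (0 < 64 * x^4) by (apply Rmult_lt_0_compat; [lra| apply pow_lt; lra]).
  apply (Rmult_le_reg_r (64 * x^4)); [lra|].
  unfold Rdiv. rewrite Rmult_assoc, Rinv_l by lra. specialize (H ltac:(lra)). lra.
Qed.

Lemma U6_gen (x : R) : 1 <= x -> Ub x <= 6.
Proof.
  intros Hx. pose proof (U6_pos (x-1) s2 s2_sq s2_bounds) as H.
  replace (x - 1 + 1) with x in H by ring.
  unfold Ub. assert (0 < 64 * x^3) by (apply Rmult_lt_0_compat; [lra| apply pow_lt; lra]).
  apply (Rmult_le_reg_r (64 * x^3)); [lra|].
  unfold Rdiv. rewrite Rmult_assoc, Rinv_l by lra. specialize (H ltac:(lra)). lra.
Qed.

Lemma L_le_U (x : R) : 1 <= x -> Lb x <= Ub x.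
Proof.
  intros Hx. unfold Lb, Ub, Ln. pose proof s2_bounds.
  assert (0 < x^3) by (apply pow_lt; lra).
  replace ((Un s2 x * x - 576 * (3 + 2 * s2)) / (64 * x ^ 4))
    with (Un s2 x / (64 * x^3) - 9 * (3 + 2*s2) / x^4) by (field; lra).
  assert (0 < x^4) by (apply pow_lt; lra).
  assert (0 <= 9 * (3 + 2*s2) / x^4) by (unfold Rdiv; apply Rmult_le_pos; [lra | left; apply Rinv_0_lt_compat; lra]).
  lra.
Qed.

Lemma step_up (x a b c d U1 L0 U2 : R) :
  0 <= x -> 0 < a -> 0 < b -> 0 < c ->
  (x+3)*d = (7*x+13)*c - (7*x+15)*b + (x+1)*a ->
  c <= U1 * b -> L0 * a <= b -> 4 <= L0 -> 0 < U1 ->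
  0 <= (x+3)*U1*L0*U2 - (7*x+13)*U1*L0 + (7*x+15)*L0 - (x+1) ->
  d <= U2 * c.
Proof.
  intros Hx Ha Hb Hc Hrec H1 H2 HL HU HI.
  assert (K1 : 0 <= (U1*b - c)*((7*x+15)*L0 - (x+1))) by (apply Rmult_le_pos; nra).
  assert (K2 : 0 <= (x+1)*U1*(b - L0*a)) by (apply Rmult_le_pos; [apply Rmult_le_pos|]; lra).
  assert (K3 : 0 <= c * ((x+3)*U1*L0*U2 - (7*x+13)*U1*L0 + (7*x+15)*L0 - (x+1)))
    by (apply Rmult_le_pos; lra).
  assert (K : 0 <= ((x+3)*U1*L0) * (U2*c - d)).
  { replace (((x+3)*U1*L0) * (U2*c - d)) with
      (c * ((x+3)*U1*L0*U2 - (7*x+13)*U1*L0 + (7*x+15)*L0 - (x+1))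
       + (U1*b - c)*((7*x+15)*L0 - (x+1)) + (x+1)*U1*(b - L0*a)
       - U1*L0*((x+3)*d - ((7*x+13)*c - (7*x+15)*b + (x+1)*a))) by ring.
    rewrite Hrec. lra. }
  assert (0 < (x+3)*U1*L0) by (repeat apply Rmult_lt_0_compat; lra).
  assert (0 <= U2*c - d).
  { apply (Rmult_le_reg_l ((x+3)*U1*L0)); [lra|]. lra. }
  lra.
Qed.

Lemma step_lo (x a b c d L1 U0 L2 : R) :
  0 <= x -> 0 < a -> 0 < b -> 0 < c ->
  (x+3)*d = (7*x+13)*c - (7*x+15)*b + (x+1)*a ->
  L1 * b <= c -> b <= U0 * a -> 4 <= U0 -> 0 < L1 ->
  0 <= (7*x+13)*L1*U0 - (7*x+15)*U0 + (x+1) - (x+3)*L1*U0*L2 ->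
  L2 * c <= d.
Proof.
  intros Hx Ha Hb Hc Hrec H1 H2 HU HL HI.
  assert (K1 : 0 <= (c - L1*b)*((7*x+15)*U0 - (x+1))) by (apply Rmult_le_pos; nra).
  assert (K2 : 0 <= (x+1)*L1*(U0*a - b)) by (apply Rmult_le_pos; [apply Rmult_le_pos|]; lra).
  assert (K3 : 0 <= c * ((7*x+13)*L1*U0 - (7*x+15)*U0 + (x+1) - (x+3)*L1*U0*L2))
    by (apply Rmult_le_pos; lra).
  assert (K : 0 <= ((x+3)*L1*U0) * (d - L2*c)).
  { replace (((x+3)*L1*U0) * (d - L2*c)) with
      (c * ((7*x+13)*L1*U0 - (7*x+15)*U0 + (x+1) - (x+3)*L1*U0*L2)
       + (c - L1*b)*((7*x+15)*U0 - (x+1)) + (x+1)*L1*(U0*a - b)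
       + L1*U0*((x+3)*d - ((7*x+13)*c - (7*x+15)*b + (x+1)*a))) by ring.
    rewrite Hrec. lra. }
  assert (0 < (x+3)*L1*U0) by (repeat apply Rmult_lt_0_compat; lra).
  assert (0 <= d - L2*c).
  { apply (Rmult_le_reg_l ((x+3)*L1*U0)); [lra|]. lra. }
  lra.
Qed.

Lemma stepQ (n a b c d U L : R) :
  1 <= n -> 0 < a -> 0 < b -> 0 < c ->
  (n+2)*d = (7*n+6)*c - (7*n+8)*b + n*a ->
  b <= U * a -> L * b <= c -> 4 <= L -> U <= 6 ->
  0 < (n+2)*L^3 - ((7*n+6)*L - (7*n+8))*U - n ->
  d * b^3 < c^3 * a.
Proof.
  intros Hn Ha Hb Hc Hrec H1 H2 HL HU HI.
  set (y := b / a). set (x := c / b).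
  assert (Eb : b = y * a) by (unfold y; field; lra).
  assert (Ec : c = x * b) by (unfold x; field; lra).
  assert (Hy : y <= U).
  { unfold y. apply (Rmult_le_reg_r a); [lra|]. unfold Rdiv. rewrite Rmult_assoc, Rinv_l by lra. lra. }
  assert (Hxl : L <= x).
  { unfold x. apply (Rmult_le_reg_r b); [lra|]. unfold Rdiv. rewrite Rmult_assoc, Rinv_l by lra. lra. }
  assert (Hy0 : 0 < y) by (unfold y; apply Rdiv_lt_0_compat; lra).
  assert (Hd : (n+2)*d = a * ((7*n+6)*x*y - (7*n+8)*y + n)).
  { rewrite Hrec, Ec, Eb. ring. }
  assert (Kh : 0 <= (x - L) * ((n+2)*(x*x + x*L + L*L) - (7*n+6)*U)).
  { apply Rmult_le_pos; [lra|].
    assert (48 <= x*x + x*L + L*L) by nra. nra. }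
  assert (Ky : 0 <= ((7*n+6)*x - (7*n+8)) * (U - y)) by (apply Rmult_le_pos; nra).
  assert (Main : (7*n+6)*x*y - (7*n+8)*y + n < (n+2)*x^3).
  { assert (E : (n+2)*x^3 - ((7*n+6)*x*y - (7*n+8)*y + n) =
      ((n+2)*L^3 - ((7*n+6)*L - (7*n+8))*U - n)
      + (x - L) * ((n+2)*(x*x + x*L + L*L) - (7*n+6)*U)
      + ((7*n+6)*x - (7*n+8)) * (U - y)) by ring.
    lra. }
  assert (Hd2 : (n+2)*d < (n+2)*(x^3*a)).
  { rewrite Hd. replace ((n+2)*(x^3*a)) with (a*((n+2)*x^3)) by ring.
    apply Rmult_lt_compat_l; lra. }
  assert (d < x^3 * a) by (apply (Rmult_lt_reg_l (n+2)); lra).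
  rewrite Ec, Eb.
  assert (0 < (y*a)^3) by (apply pow_lt; nra).
  replace ((x * (y * a)) ^ 3 * a) with ((x^3*a) * (y*a)^3) by ring.
  apply Rmult_lt_compat_r; lra.
Qed.

Definition Bd (n : nat) : Prop :=
  Lb (INR n) * Rseq n <= Rseq (n+1) <= Ub (INR n) * Rseq n.

Lemma INR_add (n k : nat) : INR (n + k) = INR n + INR k.
Proof. apply plus_INR. Qed.

Lemma Bd6 : Bd 6.
Proof.
  unfold Bd, Lb, Ub, Ln, Un. simpl (6+1)%nat. rewrite R6v, R7v.
  pose proof s2_bounds. simpl (INR 6). split; lra.
Qed.

Lemma Bd7 : Bd 7.
Proof.
  unfold Bd, Lb, Ub, Ln, Un. simpl (7+1)%nat. rewrite R7v, R8v.
  pose proof s2_bounds. simpl (INR 7). split; lra.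
Qed.

Lemma Bd_step (m : nat) : (6 <= m)%nat -> Bd m -> Bd (m+1) -> Bd (m+2).
Proof.
  intros Hm [H0l H0u] [H1l H1u].
  assert (Hx : 6 <= INR m) by (replace 6 with (INR 6) by (simpl; ring); apply le_INR; exact Hm).
  pose proof (Rseq_rec m) as Hrec.
  pose proof (Rseq_pos m ltac:(lia)) as Pa.
  pose proof (Rseq_pos (m+1) ltac:(lia)) as Pb.
  pose proof (Rseq_pos (m+2) ltac:(lia)) as Pc.
  replace (m+1+1)%nat with (m+2)%nat in * by lia.
  unfold Bd. replace (m+2+1)%nat with (m+3)%nat by lia.
  rewrite !INR_add in *. simpl (INR 1) in *. simpl (INR 2).
  replace (INR m + (1+1)) with (INR m + 2) by ring.
  pose proof (L4_gen (INR m) Hx) as L0.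
  pose proof (L4_gen (INR m + 1) ltac:(lra)) as L1.
  pose proof (L_le_U (INR m) ltac:(lra)).
  pose proof (L_le_U (INR m + 1) ltac:(lra)).
  split.
  - apply (step_lo (INR m) (Rseq m) (Rseq (m+1)) (Rseq (m+2)) (Rseq (m+3))
           (Lb (INR m + 1)) (Ub (INR m)) (Lb (INR m + 2))); try lra.
    apply I2_gen; lra.
  - apply (step_up (INR m) (Rseq m) (Rseq (m+1)) (Rseq (m+2)) (Rseq (m+3))
           (Ub (INR m + 1)) (Lb (INR m)) (Ub (INR m + 2))); try lra.
    apply I1_gen; lra.
Qed.

Lemma Bd_all (n : nat) : (6 <= n)%nat -> Bd n.
Proof.
  intros Hn.
  assert (forall k, Bd (6+k) /\ Bd (7+k)) as H.
  { induction k as [|k [IH1 IH2]].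
    - split; [exact Bd6 | exact Bd7].
    - split.
      + replace (6 + S k)%nat with (7+k)%nat by lia. exact IH2.
      + replace (7 + S k)%nat with ((6+k)+2)%nat by lia.
        apply Bd_step; [lia | exact IH1 | ].
        replace (6+k+1)%nat with (7+k)%nat by lia. exact IH2. }
  replace n with (6 + (n-6))%nat by lia. apply H.
Qed.

Lemma Qineq (p : nat) : (5 <= p)%nat ->
  Rseq (p+3) * Rseq (p+1) ^ 3 < Rseq (p+2) ^ 3 * Rseq p.
Proof.
  intros Hp.
  destruct (Nat.eq_dec p 5) as [->|Hp6].
  - simpl (5+3)%nat. simpl (5+1)%nat. simpl (5+2)%nat.
    rewrite R5v, R6v, R7v, R8v. lra.
  - assert (Hx : 6 <= INR p) by (replace 6 with (INR 6) by (simpl; ring); apply le_INR; lia).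
    pose proof (Bd_all p ltac:(lia)) as [_ Hu].
    pose proof (Bd_all (p+1) ltac:(lia)) as [Hl _].
    pose proof (Rseq_rec p) as Hrec.
    pose proof (Rseq_pos p ltac:(lia)) as Pa.
    pose proof (Rseq_pos (p+1) ltac:(lia)) as Pb.
    pose proof (Rseq_pos (p+2) ltac:(lia)) as Pc.
    replace (p+1+1)%nat with (p+2)%nat in Hl by lia.
    rewrite INR_add in Hl. simpl (INR 1) in Hl.
    pose proof (I3_gen (INR p + 1) ltac:(lra)) as I3.
    replace (INR p + 1 - 1) with (INR p) in I3 by ring.
    apply (stepQ (INR p + 1) (Rseq p) (Rseq (p+1)) (Rseq (p+2)) (Rseq (p+3))
             (Ub (INR p)) (Lb (INR p + 1))); try lra.
    all: try (apply L4_gen; lra).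
    all: try (apply U6_gen; lra).
Qed.

Definition lg (n : nat) : R := ln (Rseq n).

Definition Bq (q : nat) : R :=
  let x := INR q + 1 in
  (2 - 2*x^2) * lg (q+1) + x*(x+1) * lg q + x*(x-1) * lg (q+2).

Lemma third_diff (q : nat) : (5 <= q)%nat ->
  lg (q+3) - 3 * lg (q+2) + 3 * lg (q+1) - lg q < 0.
Proof.
  intros Hq. pose proof (Qineq q Hq) as H.
  pose proof (Rseq_pos q ltac:(lia)). pose proof (Rseq_pos (q+1) ltac:(lia)).
  pose proof (Rseq_pos (q+2) ltac:(lia)). pose proof (Rseq_pos (q+3) ltac:(lia)).
  apply ln_increasing in H; [| apply Rmult_lt_0_compat; [lra| apply pow_lt; lra]].
  rewrite !ln_mult, !ln_pow in H by (try apply pow_lt; lra).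
  unfold lg. simpl (INR 3) in H. lra.
Qed.

Lemma Bq_step (q : nat) : Bq (S q) - Bq q =
  (INR q + 1) * (INR q + 2) * (lg (q+3) - 3 * lg (q+2) + 3 * lg (q+1) - lg q).
Proof.
  unfold Bq. rewrite S_INR.
  replace (S q + 1)%nat with (q+2)%nat by lia.
  replace (S q + 2)%nat with (q+3)%nat by lia.
  replace (S q) with (q+1)%nat by lia.
  ring.
Qed.

Lemma Bq5 : Bq 5 < 0.
Proof.
  unfold Bq, lg. simpl (5+1)%nat. simpl (5+2)%nat. rewrite R5v, R6v, R7v. simpl (INR 5).
  assert (H : 329 ^ 42 * 6001 ^ 30 < 1359 ^ 70).
  { rewrite !pow_IZR. rewrite <- mult_IZR. apply IZR_lt. vm_compute. reflexivity. }
  apply ln_increasing in H; [| apply Rmult_lt_0_compat; apply pow_lt; lra].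
  rewrite !ln_mult, !ln_pow in H by (try apply pow_lt; lra).
  simpl (INR 42) in H. simpl (INR 30) in H. simpl (INR 70) in H. lra.
Qed.

Lemma Bq_neg (q : nat) : (5 <= q)%nat -> Bq q < 0.
Proof.
  intros Hq. induction q as [|q IH]; [lia|].
  destruct (Nat.eq_dec q 4) as [->|Hne]; [exact Bq5|].
  assert (5 <= q)%nat by lia.
  specialize (IH H). pose proof (Bq_step q). pose proof (third_diff q H).
  pose proof (pos_INR q).
  assert (0 < (INR q + 1) * (INR q + 2)) by (apply Rmult_lt_0_compat; lra).
  assert ((INR q + 1) * (INR q + 2) * (lg (q+3) - 3 * lg (q+2) + 3 * lg (q+1) - lg q) < 0).
  { rewrite <- (Rmult_0_r ((INR q + 1) * (INR q + 2))). apply Rmult_lt_compat_l; lra. }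
  lra.
Qed.

Theorem theorem4p5 :
  (forall n : nat, (5 <= n)%nat -> 0 < Rseq n) /\
  (forall n : nat, (6 <= n)%nat ->
     zseq (n - 1) * zseq (n + 1) < zseq n ^ 2).
Proof.
  split.
  - intros n Hn. apply Rseq_pos. lia.
  - intros n Hn. destruct n as [|q]; [lia|].
    replace (S q - 1)%nat with q by lia.
    replace (S q + 1)%nat with (q+2)%nat by lia.
    replace (S q) with (q+1)%nat by lia.
    pose proof (Bq_neg q ltac:(lia)) as HB. unfold Bq in HB.
    unfold zseq, Rpower.
    rewrite <- exp_plus. simpl (_ ^ 2). rewrite Rmult_1_r, <- exp_plus.
    apply exp_increasing.
    rewrite !INR_add. simpl (INR 1). simpl (INR 2).
    assert (Hq : 5 <= INR q) by (replace 5 with (INR 5) by (simpl; ring); apply le_INR; lia).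
    fold (lg q). fold (lg (q+1)). fold (lg (q+2)).
    set (x := INR q + 1) in *.
    replace (INR q) with (x - 1) by (unfold x; ring).
    replace (x - 1 + (1+1)) with (x + 1) by ring.
    assert (Hx : 6 <= x) by (unfold x; lra).
    assert (E : / (x-1) * lg q + / (x+1) * lg (q+2) - (/ x * lg (q+1) + / x * lg (q+1)) =
      ((2 - 2*x^2) * lg (q+1) + x*(x+1) * lg q + x*(x-1) * lg (q+2)) / (x*(x-1)*(x+1))).
    { field. repeat split; nz. }
    assert (0 < x*(x-1)*(x+1)) by (repeat apply Rmult_lt_0_compat; lra).
    assert (((2 - 2*x^2) * lg (q+1) + x*(x+1) * lg q + x*(x-1) * lg (q+2)) / (x*(x-1)*(x+1)) < 0).
    { unfold Rdiv. rewrite <- (Rmult_0_l (/ (x*(x-1)*(x+1)))).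
      apply Rmult_lt_compat_r; [apply Rinv_0_lt_compat; lra | exact HB]. }
    lra.
Qed.
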